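(* Let $L\ge3$, $m\ge1$, $x_1>\cdots>x_N$ real, $\mathbf X=(x_1,\dots,x_N)^T$. Let $A_{L,\mathrm{par}}(\mathbf X)$ be the set of all vectors obtainable as the (sign-normalized) output of a single sign-activated unit with hidden widths $m_1=\cdots=m_{L-2}=m$ and $m_{L-1}=1$. Then every vector in $A_{L,\mathrm{par}}(\mathbf X)$ belongs to $\mathcal H^{(m)}$, i.e. starts with $1$ and switches at most $m$ times.
   Context: $\sigma(x)=\mathrm{sign}(x)$ with $\mathrm{sign}(x)=1$ if $x\ge0$, $-1$ if $x<0$, applied entrywise. A single unit with widths $m_0=1,m_1,\dots,m_{L-1}=1$ maps $\mathbf X$ to $\mathbf X^{(L)}$ via $\mathbf X^{(1)}=\mathbf X$ and $\mathbf X^{(l+1)}=\sigma(\mathbf X^{(l)}\mathbf W^{(l)}+\mathbf 1\mathbf b^{(l)})\in\{-1,1\}^{N\times m_l}$ for $l\in[L-1]$, with arbitrary $\mathbf W^{(l)}\in\mathbb R^{m_{l-1}\times m_l}$, $\mathbf b^{(l)}\in\mathbb R^{1\times m_l}$. $A_{L,\mathrm{par}}(\mathbf X)$ is the set of all vectors $\epsilon\mathbf X^{(L)}\in\{-1,1\}^N$ over all such weights and biases, where $\epsilon\in\{-1,1\}$ is chosen so that the first entry is $1$. A vector $\mathbf h\in\{-1,1\}^N$ switches at $n>1$ if $h_n\neq h_{n-1}$; $\mathcal H^{(K)}$ is the set of vectors in $\{-1,1\}^N$ with first entry $1$ that switch at most $K$ times. *)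

(* Defs.v *)
From HB Require Import structures.
From mathcomp Require Import all_boot all_order all_algebra.
From mathcomp Require Import reals.
Set Implicit Arguments. Unset Strict Implicit. Unset Printing Implicit Defensive.
Import Order.TTheory GRing.Theory Num.Theory.
Local Open Scope ring_scope.

Definition sgn {R : realType} (x : R) : R := if 0 <= x then 1 else -1.

Definition sgn_layer {R : realType} {N a b : nat}
  (X : 'M[R]_(N, a)) (W : 'M[R]_(a, b)) (bias : 'rV[R]_b) : 'M[R]_(N, b) :=
  map_mx sgn (X *m W + (const_mx 1 : 'M[R]_(N, 1)) *m bias).

(* Output X^(L) of a unit with widths m_0 = 1, m_1 = ... = m_(L-2) = m,
   m_(L-1) = 1 (L-1 layers): a first layer 1 -> m (W1,b1), L-3 hidden
   layers m -> m (Ws i, bs i for i = 0 .. L-4), and a last layer m -> 1. *)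
Definition unit_output {R : realType} (L m N : nat) (X : 'cV[R]_N)
  (W1 : 'M[R]_(1, m)) (b1 : 'rV[R]_m)
  (Ws : nat -> 'M[R]_(m, m)) (bs : nat -> 'rV[R]_m)
  (WL : 'M[R]_(m, 1)) (bL : 'rV[R]_1) : 'cV[R]_N :=
  let H1 := sgn_layer X W1 b1 in
  let H := foldl (fun H i => sgn_layer H (Ws i) (bs i)) H1 (iota 0 (L - 3)) in
  sgn_layer H WL bL.

Definition A_par {R : realType} (L m N : nat) (X : 'cV[R]_N) (h : 'cV[R]_N) : Prop :=
  exists (W1 : 'M[R]_(1, m)) (b1 : 'rV[R]_m)
         (Ws : nat -> 'M[R]_(m, m)) (bs : nat -> 'rV[R]_m)
         (WL : 'M[R]_(m, 1)) (bL : 'rV[R]_1) (eps : R),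
    let out := unit_output L X W1 b1 Ws bs WL bL in
    (eps = 1 \/ eps = -1) /\
    (forall i : 'I_N, val i = 0%N -> eps * out i 0 = 1) /\
    h = eps *: out.

(* number of switches: indices n > 1 (1-based) with h_n <> h_(n-1),
   i.e. 0-based consecutive pairs (i, i+1) with different entries *)
Definition switches {R : realType} {N : nat} (h : 'cV[R]_N) : nat :=
  #|[set p : 'I_N * 'I_N | (val p.2 == (val p.1).+1) && (h p.1 0 != h p.2 0)]|.

Definition H_K {R : realType} (K N : nat) (h : 'cV[R]_N) : Prop :=
  (forall i : 'I_N, h i 0 = 1 \/ h i 0 = -1) /\
  (forall i : 'I_N, val i = 0%N -> h i 0 = 1) /\
  (switches h <= K)%N.

(* Main.v *)
Require Import Defs.
From HB Require Import structures.
From mathcomp Require Import all_boot all_order all_algebra.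
From mathcomp Require Import reals.
From mathcomp Require Import lra.
Import Order.TTheory GRing.Theory Num.Theory.
Local Open Scope ring_scope.

Lemma sgnE (R : realType) (v v' : R) : (sgn v == sgn v') = ((0 <= v) == (0 <= v')).
Proof.
have h1 : ((1:R) == -1) = false by apply/negP => /eqP; lra.
rewrite /sgn; case: (0 <= v); case: (0 <= v') => //=; rewrite ?eqxx // ?h1 // eq_sym h1 //.
Qed.

Lemma sgn_pm (R : realType) (v : R) : sgn v = 1 \/ sgn v = -1.
Proof. by rewrite /sgn; case: (0 <= v); [left|right]. Qed.

Lemma sgn_layer_row (R : realType) N a b (X : 'M[R]_(N,a)) W (bias : 'rV[R]_b) i k :
  (forall l, X i l = X k l) -> forall j, sgn_layer X W bias i j = sgn_layer X W bias k j.
Proof.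
move=> H j; rewrite /sgn_layer !mxE; congr (sgn (_ + _)).
  by apply: eq_bigr => l _; rewrite H.
by apply: eq_bigr => l _; rewrite !mxE.
Qed.

Lemma fold_row (R : realType) N m (Ws : nat -> 'M[R]_(m, m)) (bs : nat -> 'rV[R]_m) s :
  forall (H : 'M[R]_(N, m)) i k, (forall l, H i l = H k l) ->
  forall l, foldl (fun H i => sgn_layer H (Ws i) (bs i)) H s i l =
            foldl (fun H i => sgn_layer H (Ws i) (bs i)) H s k l.
Proof.
elim: s => [|x s IH] H i k Hik //=.
apply: IH; exact: sgn_layer_row.
Qed.

Lemma mono_switch N (P : 'I_N -> bool) (a b a' b' : 'I_N) :
  (forall u v : 'I_N, (u <= v)%N -> P v -> P u) ->
  val b = (val a).+1 -> val b' = (val a').+1 ->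
  P a != P b -> P a' != P b' -> val a = val a'.
Proof.
move=> mono hb hb' s1 s2.
have key : forall (a b a' b' : 'I_N), val b = (val a).+1 -> val b' = (val a').+1 ->
  P a != P b -> P a' != P b' -> (val a < val a')%N -> False.
  move=> c d c' d' hd hd' t1 t2 lt.
  have Pd : P d = false.
    case Pd: (P d) => //; move: t1; rewrite Pd (mono c d) //; by rewrite hd.
  have Pd' : P d' = false.
    case Pd': (P d') => //; move: t2; rewrite Pd' (mono c' d') //; by rewrite hd'.
  have Pc' : P c' = true by move: t2; rewrite Pd'; case: (P c').
  by move: Pd; rewrite (mono d c') // hd.
case: (ltngtP (val a) (val a')) => // lt.
  by case: (key a b a' b').
by case: (key a' b' a b).
Qed.

Theorem proposition9 (R : realType) (L m N : nat) (X : 'cV[R]_N)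
  (hL : (3 <= L)%N) (hm : (1 <= m)%N)
  (hX : forall i j : 'I_N, (i < j)%N -> X j 0 < X i 0)
  (h : 'cV[R]_N) :
  A_par L m X h -> H_K m h.
Proof.
case=> W1 [b1 [Ws [bs [WL [bL [eps]]]]]] /= [Heps [H0 ->]].
set out := unit_output L X W1 b1 Ws bs WL bL.
have outpm : forall i, out i 0 = 1 \/ out i 0 = -1.
  by move=> i; rewrite /out /unit_output /sgn_layer mxE; apply: sgn_pm.
split; [|split].
- move=> i; rewrite mxE.
  by case: Heps => ->; case: (outpm i) => ->; [left|right|right|left]; rewrite ?mulr1 ?mulrN1 ?opprK.
- by move=> i hi; rewrite mxE; apply: H0.
set H1 := sgn_layer X W1 b1.
have H1E : forall i j, H1 i j = sgn (X i 0 * W1 0 j + b1 0 j).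
  by move=> i j; rewrite /H1 /sgn_layer !mxE !big_ord1 !mxE mul1r.
have rowout : forall i k, (forall j, H1 i j = H1 k j) -> out i 0 = out k 0.
  move=> i k Hik; rewrite /out /unit_output -/H1.
  apply: sgn_layer_row; exact: fold_row.
pose f (p : 'I_N * 'I_N) : 'I_m := odflt (Ordinal hm) [pick j | H1 p.1 j != H1 p.2 j].
rewrite /switches.
set S := finset _.
have fP : forall p, p \in S -> H1 p.1 (f p) != H1 p.2 (f p).
  move=> p; rewrite inE => /andP [_ hne].
  rewrite /f; case: pickP => [j //|] /= hall.
  exfalso; move: hne; rewrite [in X in X != _]mxE [in X in _ != X]mxE.
  rewrite (rowout p.1 p.2) ?eqxx //.
  by move=> j; move: (hall j) => /negbFE /eqP.
have finj : {in S &, injective f}.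
  move=> [p1 p2] [q1 q2] hp hq eqf.
  have hp' := fP _ hp; have hq' := fP _ hq.
  move: hp hq; rewrite !inE /= => /andP [/eqP sp _] /andP [/eqP sq _].
  move: hp' hq'; rewrite /= -eqf !H1E !sgnE => hp' hq'.
  set j := f (p1, p2) in hp' hq'.
  have sp2 := sp; have sq2 := sq.
  have e1 : val p1 = val q1.
    have [w0|w0] := lerP 0 (W1 0 j).
    - apply: (@mono_switch _ (fun u => 0 <= X u 0 * W1 0 j + b1 0 j) _ _ _ _) sp sq hp' hq'.
      move=> u v; rewrite leq_eqVlt => /orP [/eqP/val_inj -> //|uv] hv.
      apply: le_trans hv _; rewrite lerD2r; apply: ler_wpM2r => //.
      exact/ltW/hX.
    - apply: (@mono_switch _ (fun u => ~~ (0 <= X u 0 * W1 0 j + b1 0 j)) _ _ _ _) sp sq _ _.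
      + move=> u v; rewrite leq_eqVlt => /orP [/eqP/val_inj -> //|uv].
        rewrite -!ltNge => hv; apply: le_lt_trans hv; rewrite lerD2r.
        by apply: ler_wnM2r; [exact: ltW | exact/ltW/hX].
      + by rewrite (inj_eq negb_inj).
      + by rewrite (inj_eq negb_inj).
  have e2 : nat_of_ord p2 = nat_of_ord q2.
    by rewrite sp2 sq2 (e1 : nat_of_ord p1 = nat_of_ord q1).
  by rewrite (val_inj e1) (val_inj e2).
rewrite -(card_in_imset finj).
by rewrite -[X in (_ <= X)%N]card_ord max_card.
Qed.
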